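(* Let $V$ be a finite set of variables and let $D_{\mathit{dag}}$ be the ABA framework defined in the context. Then the set of preferred extensions of $D_{\mathit{dag}}$ equals the set of stable extensions of $D_{\mathit{dag}}$.
   Context: Assumption-based argumentation (ABA). An ABA framework (ABAF) is a tuple $D=(\mathcal L,\mathcal R,\mathcal A,\overline{\cdot})$ where $\mathcal L$ is a set of sentences, $\mathcal R$ is a set of rules $a_0\leftarrow a_1,\dots,a_n$ ($n\ge 0$), $\mathcal A\subseteq\mathcal L$ is a set of assumptions and $\overline{\cdot}:\mathcal A\to\mathcal L$ is the contrary function. For $S\subseteq\mathcal A$, $S\vdash q$ if there is a finite rooted labelled tree whose root is labelled $q$, whose set of leaf labels is $S$ or $S\cup\{\top\}$, and in which every inner node is labelled $\mathrm{head}(r)$ for some $r\in\mathcal R$ with children labelled by the distinct elements of $\mathrm{body}(r)$ (or a single child $\top$ if the body is empty). $S$ attacks $T\subseteq\mathcal A$ if there are $S'\subseteq S$ and $a\in T$ with $S'\vdash\overline a$. $S$ is conflict-free if it does not attack itself; $S$ defends $T$ if $S$ attacks every set of assumptions attacking $T$; admissible if conflict-free and it defends itself; complete if admissible and it contains every assumption set it defends; preferred if $\subseteq$-maximal among complete sets; stable if admissible and it attacks $\{a\}$ for every $a\in\mathcal A\setminus S$. The framework $D_{\mathit{dag}}$: for a finite set $V$ of variables, assumptions are $\mathit{arr}_{xy}$ for all ordered pairs $x\neq y$ in $V$ and one assumption $\mathit{noe}_{xy}=\mathit{noe}_{yx}$ per unordered pair of distinct variables; each assumption $a$ has its own distinct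 fresh contrary $\overline a$; rules are (i) $\overline a\leftarrow b$ for all distinct $a,b\in\{\mathit{arr}_{xy},\mathit{arr}_{yx},\mathit{noe}_{xy}\}$; (ii) for each sequence $x_1\dots x_k$ of variables with consecutive elements distinct and $x_1=x_k$, and each $1\le i<k$, the rule $\overline{\mathit{arr}_{x_ix_{i+1}}}\leftarrow \mathit{arr}_{x_1x_2},\dots,\mathit{arr}_{x_{k-1}x_k}$. *)

(* Defs.v *)
From HB Require Import structures.
From mathcomp Require Import all_boot.
Set Implicit Arguments. Unset Strict Implicit. Unset Printing Implicit Defensive.

(** The rules are given as a predicate on pairs (head, body), the body being
    a finite set of sentences (children are labelled by the DISTINCT elements
    of the body, so only the set of body elements matters). *)
Record ABAF (L : finType) := MkABAF {
  rule : L -> {set L} -> Prop;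
  assm : {set L};
  contrary : L -> L   (* only relevant on assm *)
}.

Section ABA.
Variables (L : finType) (D : ABAF L).

(** [dtree q U]: there is a finite rooted labelled tree with root labelled q,
    whose set of leaf labels (other than the top symbol) is U, each leaf being
    an assumption (or top, the child of an empty-body rule) and each inner node
    labelled head(r) with one child per element of body(r). *)
Inductive dtree : L -> {set L} -> Prop :=
| DLeaf a : a \in assm D -> dtree a [set a]
| DNode q (B : {set L}) (U : L -> {set L}) :
    rule D q B -> (forall b, b \in B -> dtree b (U b)) ->
    dtree q (\bigcup_(b in B) U b).

Definition derives (S : {set L}) (q : L) : Prop := dtree q S.

Definition attacks (S T : {set L}) : Prop :=
  exists2 S' : {set L}, S' \subset S & exists2 a : L, a \in T & derives S' (contrary D a).

Definition conflict_free (S : {set L}) : Prop := ~ attacks S S.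

Definition defends (S T : {set L}) : Prop :=
  forall U : {set L}, U \subset assm D -> attacks U T -> attacks S U.

Definition admissible (S : {set L}) : Prop :=
  [/\ S \subset assm D, conflict_free S & defends S S].

Definition complete (S : {set L}) : Prop :=
  admissible S /\ (forall T : {set L}, T \subset assm D -> defends S T -> T \subset S).

Definition preferred (S : {set L}) : Prop :=
  complete S /\ (forall T : {set L}, complete T -> S \subset T -> T = S).

Definition stable (S : {set L}) : Prop :=
  admissible S /\
  (forall a, a \in assm D -> a \notin S -> attacks S [set a]).

End ABA.

Section Dag.
Variable V : finType.

(** Assumption atoms: inl (x,y) = arr_xy (x != y); inr s = noe_xy with s = {x,y}
    an unordered pair of distinct variables. *)
Definition dag_atom_ok (p : ((V * V) + {set V})%type) : bool :=
  match p with inl (x, y) => x != y | inr s => #|s| == 2 end.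

Definition datom := {p : ((V * V) + {set V})%type | dag_atom_ok p}.

(** Sentences: inl a = the assumption a; inr a = its (fresh) contrary. *)
Definition dsent := (datom + datom)%type.

Definition in_triple (x y : V) (a : datom) : Prop :=
  val a = inl (x, y) \/ val a = inl (y, x) \/ val a = inr [set x; y].

Definition dag_rule_i (q : dsent) (B : {set dsent}) : Prop :=
  exists x y (a b : datom),
    [/\ x != y, in_triple x y a, in_triple x y b & a != b] /\
    q = inr a /\ B = [set inl b].

(** rules (ii): for a sequence x_1 ... x_k (here x :: t, k = size t + 1) with
    consecutive elements distinct and x_1 = x_k, and each 1 <= i < k:
    contrary(arr_{x_i x_(i+1)}) <- arr_{x_1 x_2}, ..., arr_{x_(k-1) x_k}. *)
Definition dag_rule_ii (q : dsent) (B : {set dsent}) : Prop :=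
  exists (x : V) (t : seq V) (i : nat) (a : datom),
    [/\ path (fun u v => u != v) x t, last x t = x, i < size t,
        val a = inl (nth x (x :: t) i, nth x (x :: t) i.+1) &
        q = inr a] /\
        (forall c, c \in B <->
          exists j, j < size t /\ exists a' : datom,
            c = inl a' /\ val a' = inl (nth x (x :: t) j, nth x (x :: t) j.+1)).

Definition Ddag : ABAF dsent :=
  {| rule := fun q B => dag_rule_i q B \/ dag_rule_ii q B;
     assm := [set c : dsent | if c is inl _ then true else false];
     contrary := fun c => match c with inl a => inr a | inr a => inr a end |}.

End Dag.

(* Main.v *)
Require Import Defs.
From mathcomp Require Import all_boot zify.
From Stdlib Require Import Classical.
Set Implicit Arguments. Unset Strict Implicit. Unset Printing Implicit Defensive.

Section Gen.
Variables (L : finType) (D : ABAF L).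

Lemma att_monoS (S1 S2 T : {set L}) : S1 \subset S2 -> attacks D S1 T -> attacks D S2 T.
Proof.
move=> s12 [S' sS' [a aT d]]; exists S'; first exact: subset_trans s12.
by exists a.
Qed.

Lemma att_monoT (S T1 T2 : {set L}) : T1 \subset T2 -> attacks D S T1 -> attacks D S T2.
Proof.
move=> s12 [S' sS' [a aT d]]; exists S' => //.
by exists a => //; apply: (subsetP s12).
Qed.

Lemma stable_pref (S : {set L}) : stable D S -> preferred D S.
Proof.
move=> [[sA cf df] st].
have key : forall T : {set L}, T \subset assm D -> conflict_free D T -> S \subset T -> T \subset S.
  move=> T TA cfT ST; apply/subsetP => t tT; apply/negPn/negP => tS.
  apply: cfT; apply: (att_monoT (T1 := [set t])); first by rewrite sub1set.
  apply: att_monoS ST _; apply: st => //; exact: (subsetP TA).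
split; first split.
- by split.
- move=> T TA dT; apply/subsetP => t tT; apply/negPn/negP => tS.
  have [S' sS' [a] /set1P -> d] := st t (subsetP TA t tT) tS.
  have : attacks D S' T by exists S' => //; exists t.
  move/(dT S' (subset_trans sS' sA)) => h.
  by apply: cf; apply: att_monoT sS' h.
- move=> T [[TA cfT _] _] ST; apply/eqP; rewrite eqEsubset; apply/andP; split => //.
  exact: key.
Qed.

Lemma union_adm (M T : {set L}) : admissible D M -> T \subset assm D -> defends D M T ->
  admissible D (M :|: T).
Proof.
move=> [MA cfM dM] TA dT.
have dMU : defends D M (M :|: T).
  move=> U UA [U' sU' [a /setUP [aM|aT] d]].
  - by apply: dM => //; exists U' => //; exists a.
  - by apply: dT => //; exists U' => //; exists a.
split.
- by rewrite subUset MA TA.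
- move=> h; have MTA : M :|: T \subset assm D by rewrite subUset MA TA.
  have := dMU _ MTA h.
  move=> [U' sU' [a /setUP [aM|aT] d]].
  + by apply: cfM; exists U' => //; exists a.
  + by apply: cfM; apply: (dT M MA); exists U' => //; exists a.
- move=> U UA h; apply: att_monoS (subsetUl M T) _; exact: dMU.
Qed.

Lemma ext_step (M : {set L}) :
  ~ (forall T : {set L}, T \subset assm D -> defends D M T -> T \subset M) ->
  exists T : {set L}, [/\ T \subset assm D, defends D M T & ~ T \subset M].
Proof.
move=> h; apply: NNPP => h2; apply: h => T TA dT; apply: NNPP => nT.
by apply: h2; exists T; split.
Qed.

Lemma exists_complete n (M : {set L}) : #|L| - #|M| <= n -> admissible D M ->
  exists M', complete D M' /\ M \subset M'.
Proof.
elim: n M => [|n IH] M hn adm;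
  case: (classic (forall T : {set L}, T \subset assm D -> defends D M T -> T \subset M)) => hc.
1,3: by exists M; split => //; split.
all: have [T [TA dT nTM]] := ext_step hc.
all: have adm' := union_adm adm TA dT.
all: have pr : M \proper M :|: T by
    rewrite properE subsetUl /=; apply/negP => h; apply: nTM;
    exact: subset_trans (subsetUr M T) h.
all: have c1 := proper_card pr; have c2 : #|M :|: T| <= #|L| := max_card _.
- lia.
- have [M' [cM' sM']] := IH (M :|: T) ltac:(lia) adm'.
  exists M'; split => //; exact: subset_trans (subsetUl M T) sM'.
Qed.

Lemma pref_max (S S' : {set L}) : preferred D S -> admissible D S' -> S \subset S' ->
  S' \subset S.
Proof.
move=> [_ mx] adm sS.
have [M [cM sM]] := exists_complete (n := #|L| - #|S'|) (leqnn _) adm.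
rewrite -(mx M cM (subset_trans sS sM)); exact: sM.
Qed.

End Gen.

Section Spec.
Variable V : finType.
Notation D := (Ddag V).

Definition tri (s : {set V}) (b : datom V) : bool :=
  match val b with inl (u, v) => [set u; v] == s | inr s' => s' == s end.

Lemma in_triple_tri x y b : in_triple x y b -> tri [set x; y] b.
Proof.
by rewrite /tri; case=> [->|[->|->]] //; rewrite setUC.
Qed.

Lemma tri_in_triple x y b : x != y -> tri [set x; y] b -> in_triple x y b.
Proof.
move=> nxy; case: b => [[[u v]|s] ok]; rewrite /tri /in_triple /=; last first.
  by move/eqP->; right; right.
move/eqP=> e.
have : u \in [set x; y] by rewrite -e set21.
have : v \in [set x; y] by rewrite -e set22.
rewrite /= in ok.
move=> /set2P [ev|ev] /set2P [eu|eu]; rewrite ?ev ?eu in ok *.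
all: try by rewrite eqxx in ok.
by right; left.
by left.

Qed.

Lemma rule_head (q : dsent V) B : rule D q B -> exists a, q = inr a.
Proof.
case=> [[x [y [a [b [_ [-> _]]]]]] | [x [t [i [a [[_ _ _ _ ->] _]]]]]]; by exists a.
Qed.

Lemma rule_body (q : dsent V) B b : rule D q B -> b \in B -> exists a, b = inl a.
Proof.
case=> [[x [y [a [b0 [_ [_ ->]]]]]] /set1P -> | [x [t [i [a [_ HB]]]]] /HB [j [_ [a' [-> _]]]]];
  by eexists.
Qed.

Lemma dtree_inv (q : dsent V) U : dtree D q U ->
  (U = [set q] /\ exists a, q = inl a) \/ rule D q U.
Proof.
elim=> [a Ha | q0 B U0 Hr _ IH].
  left; split => //; move: Ha; rewrite inE; case: a => // a _; by exists a.
right.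
have E : forall b, b \in B -> U0 b = [set b].
  move=> b Hb; case: (IH b Hb) => [[//]|].
  move/rule_head => [a ea]; have [a' ea'] := rule_body Hr Hb.
  by rewrite ea in ea'.
have -> : \bigcup_(b in B) U0 b = B.
  apply/setP => c; apply/bigcupP/idP.
    by case=> b Hb; rewrite E // => /set1P ->.
  by move=> Hc; exists c => //; rewrite E // set11.
exact: Hr.
Qed.

Lemma derives_inr U a : derives D U (inr a) -> rule D (inr a) U.
Proof. by case/dtree_inv => // [[_ [b]]]. Qed.

Lemma derive_i x y (a b : datom V) : x != y -> in_triple x y a -> in_triple x y b -> a != b ->
  derives D [set inl b] (inr a).
Proof.
move=> nxy ia ib ab.
have Hr : rule D (inr a) [set inl b].
  left; exists x, y, a, b; split; first by split.
  by split.
have H := @DNode _ D (inr a) [set inl b] (fun c => [set c]) Hr.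
rewrite big_set1 in H; apply: H => c /set1P ->; apply: DLeaf; by rewrite inE.
Qed.

Lemma rule_noe (n : datom V) s U : val n = inr s -> rule D (inr n) U ->
  exists b, [/\ U = [set inl b], tri s b & b != n].
Proof.
move=> vn; case=> [[x [y [a [b [[nxy ia ib ab] [[ean] ->]]]]]] |
   [x [t [i [a [[_ _ _ va [ean]] _]]]]]]; subst a; last by rewrite vn in va.
move/in_triple_tri: ia; rewrite /tri vn => /eqP es.
exists b; split => //; last by rewrite eq_sym.
by rewrite es; apply: in_triple_tri.
Qed.

Lemma rule_with_noe (n g : datom V) s U : val n = inr s -> rule D (inr g) U ->
  inl n \in U -> tri s g /\ g != n.
Proof.
move=> vn; case=> [[x [y [a [b [[nxy ia ib ab] [[ean] ->]]]]]] /set1P [enb] |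
   [x [t [i [a [_ HB]]]]] /HB [j [_ [a' [[ena] va]]]]]; last by subst; rewrite vn in va.
subst.
move/in_triple_tri: ib; rewrite /tri vn => /eqP es.
by split => //; rewrite es; apply: in_triple_tri.
Qed.

End Spec.

Lemma triple_exists (V : finType) (g : datom V) : exists x y, x != y /\ in_triple x y g.
Proof.
case: g => [[[u v]|s] ok].
  by exists u, v; split => //; left.
have [x [y [nxy es]]] := cards2P _ ok.
by exists x, y; split => //; right; right; rewrite /= es.
Qed.

Theorem lemma1 (V : finType) (S : {set dsent V}) :
  preferred (Ddag V) S <-> stable (Ddag V) S.
Proof.
split; last exact: stable_pref.
move=> pS; have [[admS _] _] := pS; split => //.
have [SA cfS dS] := admS.
case=> [g|g] //; last by rewrite inE.
move=> _ gS.
have [x [y [nxy ig]]] := triple_exists g.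
pose s := [set x; y].
case: (classic (exists b, inl b \in S /\ tri s b)) => [[b [bS tb]]|H].
  have ib := tri_in_triple nxy tb.
  have gb : g != b by apply: contraNneq gS => ->.
  exists [set inl b]; first by rewrite sub1set.
  exists (inl g); first exact: set11.
  exact: derive_i nxy ig ib gb.
exfalso.
have ok : dag_atom_ok (inr s : ((V * V) + {set V})%type) by rewrite /= cards2 nxy.
pose n : datom V := exist _ (inr s) ok.
have vn : val n = inr s by [].
have tn : tri s n by rewrite /tri vn.
have HS : forall b, inl b \in S -> ~~ tri s b.
  by move=> b bS; apply/negP => tb; apply: H; exists b.
have inS : forall c, c \in S -> exists b, c = inl b.
  by case=> [b|b] cS; [exists b | move: (subsetP SA _ cS); rewrite inE].
set S' := inl n |: S.
have adm' : admissible (Ddag V) S'.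
  split.
  - by rewrite subUset SA sub1set inE.
  - move=> [U' sU' [c cS' d]].
    have [g' eg] : exists g', c = inl g'.
      by move: cS'; rewrite in_setU1 => /predU1P [->|/inS]; [exists n|].
    subst c; have r := derives_inr d.
    case: (boolP (inl n \in U')) => nU.
      have [tg gn] := rule_with_noe vn r nU.
      move: cS'; rewrite in_setU1 => /predU1P [[e]|gS']; first by rewrite e eqxx in gn.
      by move: (HS _ gS'); rewrite tg.
    have sU : U' \subset S.
      apply/subsetP => u uU; move: (subsetP sU' _ uU); rewrite in_setU1.
      by case/predU1P => // eu; rewrite -eu uU in nU.
    case: (eqVneq g' n) => [egn|gn].
      subst g'; have [b [eU tb bn]] := rule_noe vn r.
      have bS : inl b \in S by apply: (subsetP sU); rewrite eU set11.
      by move: (HS _ bS); rewrite tb.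
    move: cS'; rewrite in_setU1 /= => /predU1P [[e]|gS'].
      by rewrite e eqxx in gn.
    by apply: cfS; exists U' => //; exists (inl g').
  - move=> U UA [U' sU' [c cS' d]].
    move: cS'; rewrite in_setU1 => /predU1P [ec|cS].
      subst c; have r := derives_inr d.
      have [b [eU tb bn]] := rule_noe vn r.
      exists [set inl n]; first by rewrite sub1set setU11.
      exists (inl b); first by apply: (subsetP sU'); rewrite eU set11.
      apply: (derive_i nxy (tri_in_triple nxy tb) _ bn).
      by right; right.
    apply: att_monoS (subsetUr _ _) _; apply: dS => //.
    by exists U' => //; exists c.
have := pref_max pS adm' (subsetUr _ _).
move/subsetP/(_ (inl n) (setU11 _ _)) => nS.
by move: (HS _ nS); rewrite tn.
Qed.
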